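(* An element $a\in C\ell_{1,2}$ is invertible (i.e. there exists $b\in C\ell_{1,2}$ with $ab=ba=1$) if and only if $P(a)\neq 0$, and in this case $$a^{-1}=\frac{N(a)-2T(a)e_7}{P(a)}\,\bar a.$$
   Context: $C\ell_{1,2}$ is the real Clifford algebra generated by $i_1,i_2,i_3$ with $i_1^2=1$, $i_2^2=i_3^2=-1$ and $i_ti_m=-i_mi_t$ for $t\neq m$, with real basis $e_0=1$, $e_1=i_1$, $e_2=i_2$, $e_3=i_1i_2$, $e_4=i_3$, $e_5=i_1i_3$, $e_6=i_2i_3$, $e_7=i_1i_2i_3$. For $a=\sum_{t=0}^7 a_te_t$ define $\bar a=a_0-a_1e_1-a_2e_2-a_3e_3-a_4e_4-a_5e_5-a_6e_6+a_7e_7$, $N(a)=a_0^2-a_1^2+a_2^2-a_3^2+a_4^2-a_5^2+a_6^2-a_7^2$, $T(a)=a_0a_7+a_2a_5-a_1a_6-a_3a_4$, $P(a)=N(a)^2+4T(a)^2$. *)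

(* Defs.v *)
(* The real Clifford algebra Cl_{1,2} over a real field R,
   represented by coordinate vectors w.r.t. the basis e_0..e_7, where the
   index t in binary (bit0 = i1, bit1 = i2, bit2 = i3) encodes the blade:
   e_0=1, e_1=i1, e_2=i2, e_3=i1i2, e_4=i3, e_5=i1i3, e_6=i2i3, e_7=i1i2i3. *)
From HB Require Import structures.
From mathcomp Require Import all_boot all_order all_algebra.
Set Implicit Arguments. Unset Strict Implicit. Unset Printing Implicit Defensive.
Import Order.TTheory GRing.Theory Num.Theory.
Local Open Scope ring_scope.

Notation Cl12 R := {ffun 'I_8 -> R}.

Section Cl12.
Variable R : realFieldType.

Definition bit (t : nat) (j : nat) : bool := odd (t %/ 2 ^ j).

(* index of the blade e_t e_m (symmetric difference of generator sets) *)
Definition xorI (t m : 'I_8) : 'I_8 :=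
  inord (\sum_(j < 3) (bit t j (+) bit m j) * 2 ^ j)%N.

(* number of transpositions needed to sort the word e_t e_m *)
Definition swaps (t m : 'I_8) : nat :=
  (\sum_(j < 3) \sum_(k < 3) [&& bit m j, bit t k & (j < k)%N])%N.

(* number of common generators squaring to -1 (i2^2 = i3^2 = -1, i1^2 = 1) *)
Definition negsq (t m : 'I_8) : nat :=
  ((bit t 1 && bit m 1) + (bit t 2 && bit m 2))%N.

(* e_t e_m = clsign t m * e_(xorI t m) *)
Definition clsign (t m : 'I_8) : R := (-1) ^+ (swaps t m + negsq t m).

Definition e (t : nat) : Cl12 R := [ffun s : 'I_8 => ((s : nat) == t)%:R].

Definition clscale (c : R) (x : Cl12 R) : Cl12 R := [ffun s : 'I_8 => c * x s].

Definition clmul (a b : Cl12 R) : Cl12 R :=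
  [ffun s : 'I_8 => \sum_(t < 8) \sum_(m < 8)
      if xorI t m == s then clsign t m * a t * b m else 0].

Definition co (a : Cl12 R) (k : nat) : R := a (inord k).

Definition clbar (a : Cl12 R) : Cl12 R :=
  [ffun s : 'I_8 => if (s == ord0) || ((s : nat) == 7%N) then a s else - a s].

Definition N (a : Cl12 R) : R :=
  co a 0 ^+ 2 - co a 1 ^+ 2 + co a 2 ^+ 2 - co a 3 ^+ 2
  + co a 4 ^+ 2 - co a 5 ^+ 2 + co a 6 ^+ 2 - co a 7 ^+ 2.

Definition T (a : Cl12 R) : R :=
  co a 0 * co a 7 + co a 2 * co a 5 - co a 1 * co a 6 - co a 3 * co a 4.

Definition P (a : Cl12 R) : R := N a ^+ 2 + 4 * T a ^+ 2.

End Cl12.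

(* Main.v *)
Require Import Defs.
From HB Require Import structures.
From mathcomp Require Import all_boot all_order all_algebra.
From mathcomp Require Import ring lra.
Import Order.TTheory GRing.Theory Num.Theory.
Local Open Scope ring_scope.

Definition xt (t m : nat) : nat := nth 0%N (nth [::] [:: [:: 0%N; 1%N; 2%N; 3%N; 4%N; 5%N; 6%N; 7%N]; [:: 1%N; 0%N; 3%N; 2%N; 5%N; 4%N; 7%N; 6%N]; [:: 2%N; 3%N; 0%N; 1%N; 6%N; 7%N; 4%N; 5%N]; [:: 3%N; 2%N; 1%N; 0%N; 7%N; 6%N; 5%N; 4%N]; [:: 4%N; 5%N; 6%N; 7%N; 0%N; 1%N; 2%N; 3%N]; [:: 5%N; 4%N; 7%N; 6%N; 1%N; 0%N; 3%N; 2%N]; [:: 6%N; 7%N; 4%N; 5%N; 2%N; 3%N; 0%N; 1%N]; [:: 7%N; 6%N; 5%N; 4%N; 3%N; 2%N; 1%N; 0%N]] t) m.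
Definition st (t m : nat) : bool := nth false (nth [::] [:: [:: false; false; false; false; false; false; false; false]; [:: false; false; false; false; false; false; false; false]; [:: false; true; true; false; false; true; true; false]; [:: false; true; true; false; false; true; true; false]; [:: false; true; true; false; true; false; false; true]; [:: false; true; true; false; true; false; false; true]; [:: false; false; false; false; true; true; true; true]; [:: false; false; false; false; true; true; true; true]] t) m.

Lemma xorI_val (t m : 'I_8) : val (xorI t m) = xt t m.
Proof.
case: t => [[|[|[|[|[|[|[|[|//]]]]]]]] Ht]; case: m => [[|[|[|[|[|[|[|[|//]]]]]]]] Hm];
  by rewrite /xorI !big_ord_recr big_ord0 /= inordK.
Qed.

Lemma swapsE (t m : 'I_8) : odd (swaps t m + negsq t m) = st t m.
Proof.
case: t => [[|[|[|[|[|[|[|[|//]]]]]]]] Ht]; case: m => [[|[|[|[|[|[|[|[|//]]]]]]]] Hm];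
  by rewrite /swaps !big_ord_recr !big_ord0.
Qed.

Section S.
Variable R : realFieldType.
Definition mulF (x y : nat -> R) (n : nat) : R :=
  match n with
  | 0%N => x 0 * y 0 + x 1 * y 1 - x 2 * y 2 + x 3 * y 3 - x 4 * y 4 + x 5 * y 5 - x 6 * y 6 - x 7 * y 7
  | 1%N => x 0 * y 1 + x 1 * y 0 + x 2 * y 3 - x 3 * y 2 + x 4 * y 5 - x 5 * y 4 - x 6 * y 7 - x 7 * y 6
  | 2%N => x 0 * y 2 + x 1 * y 3 + x 2 * y 0 - x 3 * y 1 + x 4 * y 6 - x 5 * y 7 - x 6 * y 4 - x 7 * y 5
  | 3%N => x 0 * y 3 + x 1 * y 2 - x 2 * y 1 + x 3 * y 0 - x 4 * y 7 + x 5 * y 6 - x 6 * y 5 - x 7 * y 4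
  | 4%N => x 0 * y 4 + x 1 * y 5 - x 2 * y 6 + x 3 * y 7 + x 4 * y 0 - x 5 * y 1 + x 6 * y 2 + x 7 * y 3
  | 5%N => x 0 * y 5 + x 1 * y 4 + x 2 * y 7 - x 3 * y 6 - x 4 * y 1 + x 5 * y 0 + x 6 * y 3 + x 7 * y 2
  | 6%N => x 0 * y 6 + x 1 * y 7 + x 2 * y 4 - x 3 * y 5 - x 4 * y 2 + x 5 * y 3 + x 6 * y 0 + x 7 * y 1
  | _ => x 0 * y 7 + x 1 * y 6 - x 2 * y 5 + x 3 * y 4 + x 4 * y 3 - x 5 * y 2 + x 6 * y 1 + x 7 * y 0
  end.

Definition barF (x : nat -> R) (n : nat) : R :=
  match n with 0%N => x 0%N | 7%N => x 7%N | _ => - x n end.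
Definition cF (n t : R) (k : nat) : R :=
  match k with 0%N => n | 7%N => - (2 * t) | _ => 0 end.
Definition scF (c : R) (x : nat -> R) (k : nat) : R := c * x k.

Lemma clsignE (t m : 'I_8) : clsign R t m = if st t m then -1 else 1.
Proof. by rewrite /clsign -signr_odd swapsE; case: st; rewrite ?expr1 ?expr0. Qed.

Lemma clmulF (x y : nat -> R) :
  clmul [ffun s : 'I_8 => x s] [ffun s : 'I_8 => y s] = [ffun s : 'I_8 => mulF x y s].
Proof.
apply/ffunP => s; rewrite !ffunE.
under eq_bigr do under eq_bigr do rewrite clsignE !ffunE -val_eqE xorI_val.
rewrite !big_ord_recr !big_ord0 /=.
case: s => [[|[|[|[|[|[|[|[|//]]]]]]]] Hs] /=; ring.
Qed.

Lemma ffE (a : Cl12 R) : a = [ffun s : 'I_8 => co a s].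
Proof. by apply/ffunP => s; rewrite ffunE /co inord_val. Qed.

Lemma barE (x : nat -> R) : clbar [ffun s : 'I_8 => x s] = [ffun s : 'I_8 => barF x s].
Proof.
apply/ffunP => s; rewrite !ffunE.
by case: s => [[|[|[|[|[|[|[|[|//]]]]]]]] Hs].
Qed.

Lemma sclF (c : R) (x : nat -> R) :
  clscale c [ffun s : 'I_8 => x s] = [ffun s : 'I_8 => scF c x s].
Proof. by apply/ffunP => s; rewrite !ffunE. Qed.

Lemma Xform (n t : R) :
  clscale n (e R 0) - clscale (2 * t) (e R 7) = [ffun s : 'I_8 => cF n t s].
Proof.
apply/ffunP => s; rewrite !ffunE.
case: s => [[|[|[|[|[|[|[|[|//]]]]]]]] Hs] /=; ring.
Qed.

Lemma assoc (x y z : Cl12 R) : clmul (clmul x y) z = clmul x (clmul y z).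
Proof.
rewrite (ffE x) (ffE y) (ffE z) !clmulF.
apply/ffunP => s; rewrite !ffunE.
case: s => [[|[|[|[|[|[|[|[|//]]]]]]]] Hs] /=; ring.
Qed.

Lemma mul1 (x : Cl12 R) : clmul x (e R 0) = x.
Proof.
rewrite {1}(ffE x) /e (clmulF (co x) (fun j => (j == 0%N)%:R)).
apply/ffunP => s; rewrite ffunE [in RHS](ffE x) ffunE.
case: s => [[|[|[|[|[|[|[|[|//]]]]]]]] Hs] /=; ring.
Qed.

Lemma mul0 (x : Cl12 R) : clmul 0 x = 0.
Proof.
apply/ffunP => s; rewrite !ffunE.
apply: big1 => t _; apply: big1 => m _; rewrite ffunE.
by case: ifP; rewrite ?mulr0 ?mul0r.
Qed.

Lemma barmul (a : Cl12 R) (s : 'I_8) :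
  clmul (clbar a) a s = N a * ((val s == 0%N)%:R) + 2 * T a * ((val s == 7%N)%:R).
Proof.
rewrite [in LHS](ffE a) barE clmulF ffunE /N /T.
case: s => [[|[|[|[|[|[|[|[|//]]]]]]]] Hs] /=; ring.
Qed.

End S.

Theorem proposition2p7 (R : realFieldType) (a : Cl12 R) :
  ((exists b : Cl12 R, clmul a b = e R 0 /\ clmul b a = e R 0) <-> P a != 0) /\
  (P a != 0 ->
     let b := clmul (clscale (P a)^-1 (clscale (N a) (e R 0) - clscale (2 * T a) (e R 7)))
                     (clbar a) in
     clmul a b = e R 0 /\ clmul b a = e R 0).
Proof.
have part2 : P a != 0 ->
     let b := clmul (clscale (P a)^-1 (clscale (N a) (e R 0) - clscale (2 * T a) (e R 7)))
                     (clbar a) in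
     clmul a b = e R 0 /\ clmul b a = e R 0.
  move=> hP b; rewrite /b.
  have hk : (P a)^-1 * (N a ^+ 2 + 4 * T a ^+ 2) = 1 by rewrite mulVf.
  move: hk; set k := (P a)^-1; set n := N a; set t := T a => hk.
  rewrite Xform sclF (@ffE R a) barE !clmulF.
  split; apply/ffunP => s; rewrite !ffunE;
  case: s => [[|[|[|[|[|[|[|[|//]]]]]]]] Hs] /=;
  rewrite /scF /cF /=;
  try (transitivity (k * (n ^+ 2 + 4 * t ^+ 2)); last exact hk);
  rewrite /n /t /N /T; ring.
split; last exact: part2.
split; last first.
  move=> hP; exists (clmul (clscale (P a)^-1 (clscale (N a) (e R 0) - clscale (2 * T a) (e R 7)))
                     (clbar a)); exact: part2.
case=> b [hab _]; apply/negP => /eqP hP0.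
have [hN hT] : N a = 0 /\ T a = 0.
  have h1 : 0 <= N a ^+ 2 := sqr_ge0 _.
  have h2 : 0 <= 4 * T a ^+ 2 := mulr_ge0 (ler0n _ 4) (sqr_ge0 _).
  have /andP[hN2 hT2] : (N a ^+ 2 == 0) && (4 * T a ^+ 2 == 0).
    by rewrite -paddr_eq0 //; apply/eqP.
  split; first by apply/eqP; rewrite -sqrf_eq0.
  by move: hT2; rewrite mulf_eq0 pnatr_eq0 /= sqrf_eq0 => /eqP.
have h0 : clmul (clbar a) a = 0.
  by apply/ffunP => s; rewrite barmul hN hT ffunE; ring.
have hb0 : clbar a = 0 by rewrite -[LHS]mul1 -hab -assoc h0 mul0.
have ha0 : a = 0.
  apply/ffunP => s; move/ffunP/(_ s): hb0; rewrite !ffunE.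
  by case: ifP => // _ /eqP; rewrite oppr_eq0 => /eqP.
move: hab; rewrite ha0 mul0 => /ffunP/(_ ord0); rewrite !ffunE /= => /eqP.
by rewrite eq_sym oner_eq0.
Qed.
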